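(* Let $P(x)\in\mathbb{Z}[x]$ be an irreducible monic polynomial of degree $g\geq2$ all of whose roots are either real or of modulus $1$, with at least one root of modulus $1$. Let $\gamma$ be a root of $P(x)$ with $|\gamma|=1$, let $F=\mathbb{Q}(\gamma+\gamma^{-1})$ (a totally real number field), and let $a=(\gamma-\gamma^{-1})^2\in\mathcal{O}_F$. Let $p$ be a prime number such that the quaternion algebra $B=\left(\frac{a,p}{F}\right)$ is a division algebra. Then there exists a positive anti-involution on $B$ over $\mathbb{Q}$.
   Context: For a field $F$ of characteristic $\neq2$ and $a,b\in F^\times$, $\left(\frac{a,b}{F}\right)$ is the $F$-algebra with basis $1,i,j,ij$ subject to $i^2=a$, $j^2=b$, $ij=-ji$. An anti-involution of a $\mathbb{Q}$-algebra $B$ over $\mathbb{Q}$ is a $\mathbb{Q}$-linear map $\phi\colon B\to B$ with $\phi(1)=1$, $\phi(\phi(x))=x$ and $\phi(xy)=\phi(y)\phi(x)$. It is positive (over $\mathbb{Q}$) if $\mathrm{Tr}(\phi(x)x)>0$ for all nonzero $x\in B$, where $\mathrm{Tr}(c)$ is the trace of left multiplication by $c$ on $B$ viewed as a finite-dimensional $\mathbb{Q}$-vector space. *)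

(* Defs.v *)
From HB Require Import structures.
From mathcomp Require Import all_boot all_order all_algebra all_field.
Set Implicit Arguments. Unset Strict Implicit. Unset Printing Implicit Defensive.
Import Order.TTheory GRing.Theory Num.Theory.
Local Open Scope ring_scope.

(* The quaternion algebra (a,b / F) over a field F, realized on F^4 with
   the coordinates w.r.t. the basis 1, i, j, ij.  As a rat-vector space
   (when F is a fieldExtType rat) it carries the product vectType structure. *)
Notation quat F := (F * F * F * F)%type.

Definition qone {F : fieldType} : quat F := (1, 0, 0, 0).

(* i^2 = a, j^2 = b, ij = -ji *)
Definition qmul {F : fieldType} (a b : F) (x y : quat F) : quat F :=
  let: (x0, x1, x2, x3) := x in
  let: (y0, y1, y2, y3) := y in
  (x0 * y0 + a * x1 * y1 + b * x2 * y2 - a * b * x3 * y3,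
   x0 * y1 + x1 * y0 - b * x2 * y3 + b * x3 * y2,
   x0 * y2 + x2 * y0 + a * x1 * y3 - a * x3 * y1,
   x0 * y3 + x3 * y0 + x1 * y2 - x2 * y1).

Definition quat_division {F : fieldType} (a b : F) : Prop :=
  forall x : quat F, x != 0 ->
    exists y : quat F, qmul a b x y = qone /\ qmul a b y x = qone.

(* Tr(c): trace of left multiplication by c on B, viewed as a Q-vector space
   (matrix of the Q-linear map x |-> c x in a Q-basis of B). *)
Definition qtrace {F : fieldExtType rat} (a b : F) (c : quat F) : rat :=
  let e := vbasis (fullv : {vspace quat F}) in
  \tr (lin1_mx (passmx.rVof e \o qmul a b c \o passmx.vecof e)).

Definition anti_involution {F : fieldExtType rat} (a b : F)
    (phi : quat F -> quat F) : Prop :=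
  [/\ linear phi,
      phi qone = qone,
      (forall x, phi (phi x) = x) &
      (forall x y, phi (qmul a b x y) = qmul a b (phi y) (phi x))].

Definition positive_anti_involution {F : fieldExtType rat} (a b : F)
    (phi : quat F -> quat F) : Prop :=
  anti_involution a b phi /\
  (forall x : quat F, x != 0 -> 0 < qtrace a b (qmul a b (phi x) x)).

(* Main.v *)
Require Import Defs.
From HB Require Import structures.
From mathcomp Require Import all_boot all_order all_algebra all_field.
From mathcomp Require Import ring lra.
Import Order.TTheory GRing.Theory Num.Theory.
Local Open Scope ring_scope.

Set Implicit Arguments. Unset Strict Implicit. Unset Printing Implicit Defensive.

Lemma ratr_real (r : rat) : (ratr r : algC) \is Num.real.
Proof. exact/Creal_Crat/Crat_rat. Qed.


Section FTrace.
Variable F : fieldExtType rat.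
Local Notation n := (\dim {:F}).
Local Notation e := (vbasis (fullv : {vspace F})).

Definition Mof (y : F) : 'M[rat]_n :=
  lin1_mx (passmx.rVof e \o ( *%R y) \o passmx.vecof e).

Lemma MofE y i j : Mof y i j = coord e j (y * e`_i).
Proof. by rewrite /Mof !mxE /= passmx.vecof_delta. Qed.

Lemma Mof_mul z w : Mof z *m Mof w = Mof (w * z).
Proof.
apply/matrixP => i k; rewrite [LHS]mxE MofE -mulrA.
rewrite (coord_vbasis (memvf (z * e`_i))) mulr_sumr linear_sum /=.
by apply: eq_bigr => j _; rewrite !MofE -scalerAr linearZ /= mulrC.
Qed.

Lemma Mof_comm z w : Mof z *m Mof w = Mof w *m Mof z.
Proof. by rewrite !Mof_mul mulrC. Qed.

Lemma Mof1 : Mof 1 = 1%:M.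
Proof.
apply/matrixP => i j; rewrite MofE mul1r coord_free ?mxE //.
exact: basis_free (vbasisP fullv).
Qed.

Lemma Mof_lin y : Mof y = \sum_k coord e k y *: Mof e`_k.
Proof.
apply/matrixP => i j; rewrite MofE summxE.
rewrite {1}[y](coord_vbasis (memvf y)) mulr_suml linear_sum /=.
by apply: eq_bigr => k _; rewrite [in RHS]mxE MofE -scalerAl linearZ.
Qed.

Lemma MofD y z : Mof (y + z) = Mof y + Mof z.
Proof. by apply/matrixP => i j; rewrite [in RHS]mxE !MofE mulrDl linearD. Qed.


Lemma MofB y z : Mof (y - z) = Mof y - Mof z.
Proof. by apply/eqP; rewrite eq_sym subr_eq -MofD subrK. Qed.

Definition Nof (y : F) : 'M[algC]_n := map_mx ratr (Mof y).

Lemma Nof_mul z w : Nof z *m Nof w = Nof (w * z).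
Proof. by rewrite /Nof -map_mxM Mof_mul. Qed.

Lemma Nof_lin y : Nof y = \sum_k ratr (coord e k y) *: Nof e`_k.
Proof.
rewrite /Nof Mof_lin; apply/matrixP => i j.
rewrite [LHS]mxE !summxE rmorph_sum /=; apply: eq_bigr => k _.
by rewrite !mxE rmorphM.
Qed.

Lemma exists_trig : exists2 P : 'M[algC]_n, P \in unitmx &
  forall y, is_trig_mx (conjmx P (Nof y)).
Proof.
have [|P Pu /allP Ptrig] := @cotrigonalization _ _ [seq Nof e`_k | k : 'I_n <- enum 'I_n].
  move=> A B /mapP [k _ ->] /mapP [l _ ->].
  by rewrite /comm_mx !Nof_mul mulrC.
exists P; first exact: unitarymx_unit.
move=> y; rewrite Nof_lin; apply/is_trig_mxP => i j lt_ij.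
rewrite conjumx ?unitarymx_unit // mulmx_sumr mulmx_suml summxE big1 // => k _.
have /is_trig_mxP := Ptrig (Nof e`_k) (map_f _ (mem_enum _ k)).
rewrite /= conjumx ?unitarymx_unit // => /(_ i j lt_ij) H.
by rewrite -scalemxAr -scalemxAl mxE H mulr0.
Qed.

End FTrace.

Section Chi.
Variable F : fieldExtType rat.
Local Notation n := (\dim {:F}).
Variable PP : {P : 'M[algC]_n | P \in unitmx /\ forall y, is_trig_mx (conjmx P (Nof y))}.
Local Notation P := (sval PP).
Let Pu : P \in unitmx. Proof. by case: (svalP PP). Qed.
Let Ptrig : forall y, is_trig_mx (conjmx P (Nof y)). Proof. by case: (svalP PP). Qed.
Variable i : 'I_n.

Definition chi (y : F) : algC := conjmx P (Nof y) i i.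

Lemma conjT_mul z w : conjmx P (Nof (z * w)) = conjmx P (Nof z) *m conjmx P (Nof w).
Proof.
rewrite !conjumx // mulrC -Nof_mul !mulmxA mulmxKV //.
Qed.

Lemma mxBE_ (A B : 'M[algC]_n) k l : (A - B) k l = A k l - B k l.
Proof. by rewrite !mxE. Qed.

Lemma chi_is_zmod : zmod_morphism chi.
Proof.
move=> y z; rewrite /chi /Nof MofB map_mxB /= !conjumx //.
by rewrite mulmxBr mulmxBl mxBE_.
Qed.

Lemma chi_is_mul : monoid_morphism chi.
Proof.
split.
  rewrite /chi /Nof Mof1 map_scalar_mx /= rmorph1 conjumx // mulmx1 mulmxV //.
  by rewrite mxE eqxx.
move=> y z; rewrite /chi conjT_mul mxE (bigD1 i) //= big1 ?addr0 // => j nji.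
have [lt|gt] := ltnP i j.
  by have /is_trig_mxP -> := Ptrig y; rewrite ?mul0r.
have /is_trig_mxP -> := Ptrig z; rewrite ?mulr0 //.
by rewrite ltn_neqAle gt andbT nji.
Qed.

HB.instance Definition _ := GRing.isZmodMorphism.Build F algC chi chi_is_zmod.
HB.instance Definition _ := GRing.isMonoidMorphism.Build F algC chi chi_is_mul.

End Chi.

Lemma trMof_sum (F : fieldExtType rat) (P : 'M[algC]_(\dim {:F})) (Pu : P \in unitmx) y :
  ratr (\tr (Mof y)) = \sum_i conjmx P (Nof y) i i.
Proof.
rewrite -trace_map_mx -/(Nof y) conjumx //.
have -> : \sum_i (P *m Nof y *m invmx P) i i = \tr (P *m Nof y *m invmx P) by [].
by rewrite mxtrace_mulC mulKmx.
Qed.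

Lemma trMof_gt0 (F : fieldExtType rat) (y : F) :
  (forall chi : {rmorphism F -> algC}, 0 < chi y) -> 0 < \tr (Mof y).
Proof.
move=> H; have [P Pu Ptrig] := exists_trig F.
pose PP : {P : 'M[algC]_(\dim {:F}) | P \in unitmx /\ forall y, is_trig_mx (conjmx P (Nof y))} :=
  exist _ P (conj Pu Ptrig).
rewrite -(ltr_rat algC) rmorph0 (trMof_sum Pu).
have n0 : (0 < \dim {:F})%N by apply: adim_gt0.
rewrite (bigD1 (Ordinal n0)) //=.
apply: ltr_wpDr.
  apply: sumr_ge0 => j _; apply: ltW.
  exact: (H (GRing.RMorphism.clone _ _ (chi PP j) _)).
exact: (H (GRing.RMorphism.clone _ _ (chi PP (Ordinal n0)) _)).
Qed.


Definition trV (V : vectType rat) (h : V -> V) : rat :=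
  \tr (lin1_mx (passmx.rVof (vbasis (fullv : {vspace V})) \o h \o
                passmx.vecof (vbasis (fullv : {vspace V})))).

Lemma trV_E (V : vectType rat) (h : V -> V) :
  trV h = \sum_i coord (vbasis fullv) i (h (vbasis (fullv : {vspace V}))`_i).
Proof. by apply: eq_bigr => i _; rewrite !mxE /= passmx.vecof_delta. Qed.

Lemma trV_ext (V : vectType rat) (h1 h2 : V -> V) : h1 =1 h2 -> trV h1 = trV h2.
Proof. by move=> E; rewrite !trV_E; apply: eq_bigr => i _; rewrite E. Qed.

Lemma trV_add (V : vectType rat) (h1 h2 : V -> V) :
  trV (fun x => h1 x + h2 x) = trV h1 + trV h2.
Proof. by rewrite !trV_E -big_split /=; apply: eq_bigr => i _; rewrite linearD. Qed.

Section Swap.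
Variables (V W : vectType rat) (f : V -> W) (g : W -> V).
Hypotheses (lf : linear f) (lg : linear g).
Definition fL := f.
Definition gL := g.
HB.instance Definition _ := GRing.isLinear.Build rat V W *:%R fL lf.
HB.instance Definition _ := GRing.isLinear.Build rat W V *:%R gL lg.

Lemma trV_swap : trV (g \o f) = trV (f \o g).
Proof.
change (trV (gL \o fL) = trV (fL \o gL)).
rewrite !trV_E /=.
transitivity (\sum_(i < \dim {:V}) \sum_(j < \dim {:W}) coord (vbasis fullv) j (fL (vbasis (fullv : {vspace V}))`_i) *
     coord (vbasis fullv) i (gL (vbasis (fullv : {vspace W}))`_j)).
  apply: eq_bigr => i _.
  rewrite {1}(coord_vbasis (memvf (fL (vbasis (fullv : {vspace V}))`_i))).
  rewrite linear_sum linear_sum /=; apply: eq_bigr => j _.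
  by rewrite !linearZ.
rewrite exchange_big /=; apply: eq_bigr => j _.
rewrite [in RHS](coord_vbasis (memvf (gL (vbasis (fullv : {vspace W}))`_j))).
rewrite linear_sum linear_sum /=; apply: eq_bigr => i _.
by rewrite !linearZ /= mulrC.
Qed.
End Swap.

Lemma linear_comp_ (U V W : lmodType rat) (f : U -> V) (g : V -> W) :
  linear f -> linear g -> linear (g \o f).
Proof. by move=> lf lg r x y /=; rewrite lf lg. Qed.

Section Quat.
Variable F : fieldExtType rat.
Variables a b : F.

Definition pr0 (x : quat F) : F := x.1.1.1.
Definition pr1 (x : quat F) : F := x.1.1.2.
Definition pr2 (x : quat F) : F := x.1.2.
Definition pr3 (x : quat F) : F := x.2.
Definition in0 (z : F) : quat F := (z, 0, 0, 0).
Definition in1 (z : F) : quat F := (0, z, 0, 0).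
Definition in2 (z : F) : quat F := (0, 0, z, 0).
Definition in3 (z : F) : quat F := (0, 0, 0, z).

Lemma scale_quat (r : rat) (x0 x1 x2 x3 : F) :
  r *: ((x0, x1, x2, x3) : quat F) = (r%:A * x0, r%:A * x1, r%:A * x2, r%:A * x3).
Proof. by rewrite !mulr_algl. Qed.

Lemma add_quat (x0 x1 x2 x3 y0 y1 y2 y3 : F) :
  ((x0, x1, x2, x3) : quat F) + (y0, y1, y2, y3) = (x0 + y0, x1 + y1, x2 + y2, x3 + y3).
Proof. by []. Qed.

Lemma lin_pr0 : linear pr0. Proof. by move=> r [[[? ?] ?] ?] [[[? ?] ?] ?]. Qed.
Lemma lin_pr1 : linear pr1. Proof. by move=> r [[[? ?] ?] ?] [[[? ?] ?] ?]. Qed.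
Lemma lin_pr2 : linear pr2. Proof. by move=> r [[[? ?] ?] ?] [[[? ?] ?] ?]. Qed.
Lemma lin_pr3 : linear pr3. Proof. by move=> r [[[? ?] ?] ?] [[[? ?] ?] ?]. Qed.
Lemma lin_in0 : linear in0.
Proof. by move=> r x y; rewrite /in0 scale_quat add_quat !mulr0 !addr0 mulr_algl. Qed.
Lemma lin_in1 : linear in1.
Proof. by move=> r x y; rewrite /in1 scale_quat add_quat !mulr0 !addr0 mulr_algl. Qed.
Lemma lin_in2 : linear in2.
Proof. by move=> r x y; rewrite /in2 scale_quat add_quat !mulr0 !addr0 mulr_algl. Qed.
Lemma lin_in3 : linear in3.
Proof. by move=> r x y; rewrite /in3 scale_quat add_quat !mulr0 !addr0 mulr_algl. Qed.

Lemma lin_qmul c : linear (qmul a b c).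
Proof.
move=> r [[[y0 y1] y2] y3] [[[z0 z1] z2] z3]; case: c => [[[c0 c1] c2] c3].
rewrite scale_quat add_quat /= scale_quat add_quat.
by congr (_, _, _, _); ring.
Qed.


Lemma qtrace_E c : qtrace a b c = trV (fun z : F => pr0 c * z) *+ 4.
Proof.
have -> : qtrace a b c = trV (qmul a b c) by [].
rewrite (@trV_ext _ _ (fun x => ((qmul a b c (in0 (pr0 x)) + qmul a b c (in1 (pr1 x)))
   + qmul a b c (in2 (pr2 x))) + qmul a b c (in3 (pr3 x)))); last first.
  move=> [[[x0 x1] x2] x3]; case: c => [[[c0 c1] c2] c3].
  rewrite /in0 /in1 /in2 /in3 /pr0 /pr1 /pr2 /pr3 /= !add_quat.
  by congr (_, _, _, _) => /=; ring.
rewrite !trV_add.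
have h0 : trV (fun x => qmul a b c (in0 (pr0 x))) = trV (fun z : F => pr0 c * z).
  rewrite -[LHS]/(trV ((qmul a b c \o in0) \o pr0)).
  rewrite (trV_swap lin_pr0 (linear_comp_ lin_in0 (lin_qmul c))).
  apply: trV_ext => z; clear; case: c => [[[c0 c1] c2] c3]; rewrite /comp /in0 /in1 /in2 /in3 /pr0 /pr1 /pr2 /pr3 /=; ring.
have h1 : trV (fun x => qmul a b c (in1 (pr1 x))) = trV (fun z : F => pr0 c * z).
  rewrite -[LHS]/(trV ((qmul a b c \o in1) \o pr1)).
  rewrite (trV_swap lin_pr1 (linear_comp_ lin_in1 (lin_qmul c))).
  apply: trV_ext => z; clear; case: c => [[[c0 c1] c2] c3]; rewrite /comp /in0 /in1 /in2 /in3 /pr0 /pr1 /pr2 /pr3 /=; ring.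
have h2 : trV (fun x => qmul a b c (in2 (pr2 x))) = trV (fun z : F => pr0 c * z).
  rewrite -[LHS]/(trV ((qmul a b c \o in2) \o pr2)).
  rewrite (trV_swap lin_pr2 (linear_comp_ lin_in2 (lin_qmul c))).
  apply: trV_ext => z; clear; case: c => [[[c0 c1] c2] c3]; rewrite /comp /in0 /in1 /in2 /in3 /pr0 /pr1 /pr2 /pr3 /=; ring.
have h3 : trV (fun x => qmul a b c (in3 (pr3 x))) = trV (fun z : F => pr0 c * z).
  rewrite -[LHS]/(trV ((qmul a b c \o in3) \o pr3)).
  rewrite (trV_swap lin_pr3 (linear_comp_ lin_in3 (lin_qmul c))).
  apply: trV_ext => z; clear; case: c => [[[c0 c1] c2] c3]; rewrite /comp /in0 /in1 /in2 /in3 /pr0 /pr1 /pr2 /pr3 /=; ring.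
by rewrite h0 h1 h2 h3 !mulrS mulr0n addr0 !addrA.
Qed.

End Quat.





Lemma rat_sq_between (L U : rat) : 0 < L -> L < U ->
  exists k : rat, 0 < k /\ L < k ^+ 2 /\ k ^+ 2 < U.
Proof.
move=> L0 LU.
pose N := Num.bound ((2 * L + 3) / (U - L)).
have hN : (2 * L + 3) / (U - L) < N%:R by apply: archi_boundP; apply: divr_ge0; lra.
have N0 : (0 : rat) < N%:R.
  by apply: le_lt_trans hN; apply: divr_ge0; lra.
pose n : rat := N%:R.
pose M := Num.bound (L + 1).
have hM : L + 1 < M%:R by apply: archi_boundP; lra.
have ex : exists m : nat, L < (m%:R / n) ^+ 2.
  exists (N * M)%N; rewrite natrM mulrAC mulfV ?mul1r; last by rewrite gt_eqF.
  nra.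
case: (ex_minnP ex) => m Hm Hmin.
have m0 : (0 < m)%N.
  by case: m Hm {Hmin} => // ; rewrite mul0r expr0n /=; lra.
have Hm1 : ~ L < ((m.-1)%:R / n) ^+ 2.
  move=> H; have := Hmin _ H; rewrite leqNgt => /negP; apply.
  by rewrite prednK ?leqnn // ltn_predL.
exists (m%:R / n); split; first by apply: divr_gt0; rewrite ?ltr0n //.
split => //.
have eq1 : m%:R / n = (m.-1)%:R / n + 1 / n.
  by rewrite -mulrDl natr1 prednK.
have hA : 0 <= (m.-1)%:R / n by apply: divr_ge0; rewrite ?ler0n //; lra.
rewrite eq1; set A := _ / n in hA Hm1 *.
have hA2 : A ^+ 2 <= L by rewrite leNgt; apply/negP.
have hAL : A <= L + 1 by nra.
have inv : 1 / n * n = 1 by rewrite mul1r mulVf // gt_eqF.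
have hn : (2 * L + 3) < N%:R * (U - L).
  by rewrite -ltr_pdivrMr; [exact: hN | lra].
have hinv : 0 < 1 / n by rewrite mul1r invr_gt0.
have : (A + 1 / n) ^+ 2 = A ^+ 2 + (2 * A + 1 / n) * (1 / n) by ring.
move=> ->.
have h1n : 1 / n <= 1.
  by rewrite mul1r invf_le1 // ; rewrite /n; case: (N) N0 => [|N'] //; rewrite ler1n.
suff : (2 * A + 1 / n) * (1 / n) < U - L by lra.
have : (2 * A + 1 / n) <= 2 * L + 3 by lra.
move=> H2.
apply: (le_lt_trans (ler_wpM2r (ltW hinv) H2)).
rewrite -(ltr_pM2r N0) -mulrA.
rewrite inv mulr1; lra.
Qed.

Lemma eps_exists (l : seq algC) : exists e : rat, [/\ 0 < e, e <= 1 &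
  forall v, v \in l -> v \is Num.real -> v != 4%:R -> ratr e <= `|v - 4%:R|].
Proof.
elim: l => [|v l [e1 [e10 e11 He1]]]; first by exists 1.
have [hv|hv] := boolP ((v \is Num.real) && (v != 4%:R)); last first.
  exists e1; split => // w; rewrite inE => /orP [/eqP -> rw nw|]; last exact: He1.
  by move: hv; rewrite rw nw.
case/andP: hv => rv nv.
have pv : 0 < `|v - 4%:R| by rewrite normr_gt0 subr_eq0.
pose k := Num.bound (`|v - 4%:R|^-1).
have hk : `|v - 4%:R|^-1 < k%:R by apply: archi_boundP; rewrite invr_ge0 ltW.
pose e2 : rat := (k.+1)%:R^-1.
have e20 : 0 < e2 by rewrite invr_gt0 ltr0n.
have He2 : ratr e2 <= `|v - 4%:R|.
  rewrite fmorphV rmorph_nat.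
  rewrite invf_ple ?posrE ?ltr0n //; apply: ltW; apply: (lt_le_trans hk).
  by rewrite ler_nat.
exists (Num.min e1 e2); split.
- by rewrite lt_min e10 e20.
- by rewrite ge_min e11.
move=> w; rewrite inE => /orP [/eqP -> _ _|wl rw nw].
  apply: le_trans He2; rewrite ler_rat ge_min lexx orbT //.
  apply: le_trans (He1 w wl rw nw); rewrite ler_rat ge_min lexx //.
Qed.

Lemma gap (l : seq algC) (p : rat) : 0 < p -> exists s : rat,
  forall v, v \in l -> v \is Num.real -> v != 4%:R ->
    (v - 4%:R) * (1 - ratr (p * s ^+ 2) * v) < 0.
Proof.
move=> p0; have [e [e0 e1 He]] := eps_exists l.
have hL : 0 < p * (4%:R - e) by apply: mulr_gt0 => //; lra.
have hLU : p * (4%:R - e) < p * (4%:R + e) by rewrite ltr_pM2l //; lra.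
have [k [k0 [kL kU]]] := rat_sq_between hL hLU.
exists k^-1 => v vl rv nv.
pose T : rat := k ^+ 2 / p.
have hT : `|T - 4%:R| < e.
  have Tp : T * p = k ^+ 2 by rewrite /T mulfVK // gt_eqF.
  rewrite ltr_norml; apply/andP; split; nra.
have qT : ratr (p * k^-1 ^+ 2) * (ratr T : algC) = 1.
  rewrite -rmorphM /T.
  have -> : p * k^-1 ^+ 2 * (k ^+ 2 / p) = 1.
    by field; rewrite ?gt_eqF ?andbT.
  exact: rmorph1.
have q0 : (0 : algC) < ratr (p * k^-1 ^+ 2).
  by rewrite ltr0q mulr_gt0 // exprn_gt0 // invr_gt0.
have -> : 1 - ratr (p * k^-1 ^+ 2) * v = ratr (p * k^-1 ^+ 2) * (ratr T - v).
  by rewrite mulrBr qT.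
rewrite mulrCA pmulr_rlt0 //.
set w := v - 4%:R; set z : algC := ratr T - 4%:R.
have -> : ratr T - v = z - w by rewrite /z /w; ring.
have rw : w \is Num.real by rewrite rpredB ?realn.
have rz : z \is Num.real by rewrite rpredB ?ratr_real ?realn.
have w0 : 0 < `|w| by rewrite normr_gt0 subr_eq0.
have hz : `|z| < `|w|.
  apply: lt_le_trans (He v vl rv nv).
  by rewrite /z -(rmorph_nat (ratr : rat -> algC)) -rmorphB -ratr_norm ltr_rat.
rewrite mulrBr subr_lt0.
apply: (le_lt_trans (real_ler_norm (rpredM rw rz))).
by rewrite -expr2 -real_normK // expr2 normrM ltr_pM2l.
Qed.


Section Phi.
Variable F : fieldExtType rat.
Variables a b t : F.
Hypothesis d0 : 1 - b * t ^+ 2 != 0.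
Let d := 1 - b * t ^+ 2.
Ltac fld := rewrite /d; field; rewrite ?d0 //.

Definition qphi (x : quat F) : quat F :=
  let: (x0, x1, x2, x3) := x in
  (x0, (2 * b * t * x3 - (1 + b * t ^+ 2) * x1) / d, x2,
       ((1 + b * t ^+ 2) * x3 - 2 * t * x1) / d).

Lemma qphi1 : qphi qone = qone.
Proof. rewrite /qphi /qone; congr (_, _, _, _); fld. Qed.

Lemma qphiK x : qphi (qphi x) = x.
Proof.
case: x => [[[x0 x1] x2] x3]; rewrite /qphi /=; congr (_, _, _, _); fld.
Qed.

Lemma qphiM x y : qphi (qmul a b x y) = qmul a b (qphi y) (qphi x).
Proof.
case: x => [[[x0 x1] x2] x3]; case: y => [[[y0 y1] y2] y3].
rewrite /qphi /qmul /=; congr (_, _, _, _); fld.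
Qed.

Lemma qphi_pos x : (qmul a b (qphi x) x).1.1.1 =
  x.1.1.1 ^+ 2 + b * x.1.2 ^+ 2
  - a / d * ((x.1.1.2 - b * t * x.2) ^+ 2 + b * (x.2 - t * x.1.1.2) ^+ 2).
Proof.
case: x => [[[x0 x1] x2] x3]; rewrite /qphi /qmul /=; fld.
Qed.
Lemma qphi_lin : linear qphi.
Proof.
move=> r [[[y0 y1] y2] y3] [[[z0 z1] z2] z3].
rewrite scale_quat /= scale_quat /=.
by congr (_, _, _, _) => /=; fld.
Qed.
End Phi.


Lemma real_sq_ge0 (u : algC) : u \is Num.real -> 0 <= u ^+ 2.
Proof. by move=> ru; rewrite -real_normK // exprn_ge0. Qed.

Lemma real_sq_gt0 (u : algC) : u \is Num.real -> u != 0 -> 0 < u ^+ 2.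
Proof. by move=> ru u0; rewrite -real_normK // exprn_gt0 // normr_gt0. Qed.

Lemma pos_combo (X0 X2 A B W pp : algC) :
  X0 \is Num.real -> X2 \is Num.real -> A \is Num.real -> B \is Num.real ->
  0 < W -> 0 < pp -> [|| X0 != 0, X2 != 0, A != 0 | B != 0] ->
  0 < X0 ^+ 2 + pp * X2 ^+ 2 + W * (A ^+ 2 + pp * B ^+ 2).
Proof.
move=> r0 r2 rA rB W0 p0 nz.
have h0 := real_sq_ge0 r0; have h2 := real_sq_ge0 r2.
have hA := real_sq_ge0 rA; have hB := real_sq_ge0 rB.
have g2 : 0 <= pp * X2 ^+ 2 by rewrite mulr_ge0 // ltW.
have gB : 0 <= pp * B ^+ 2 by rewrite mulr_ge0 // ltW.
have gAB : 0 <= A ^+ 2 + pp * B ^+ 2 by rewrite addr_ge0.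
have gW : 0 <= W * (A ^+ 2 + pp * B ^+ 2) by rewrite mulr_ge0 // ltW.
have s3 (a1 a2 a3 : algC) : 0 <= a1 -> 0 <= a2 -> 0 <= a3 ->
    [|| 0 < a1, 0 < a2 | 0 < a3] -> 0 < a1 + a2 + a3.
  move=> g1 g2' g3 /or3P [] h.
  - by apply: ltr_wpDr g3 _; apply: ltr_wpDr g2' h.
  - by apply: ltr_wpDr g3 _; apply: ltr_wpDl g1 h.
  - by apply: ltr_wpDl _ h; rewrite addr_ge0.
apply: s3 => //; case/or4P: nz => nz.
- by rewrite real_sq_gt0.
- by apply/orP; right; apply/orP; left; rewrite mulr_gt0 // real_sq_gt0.
- apply/orP; right; apply/orP; right; rewrite mulr_gt0 //.
  by apply: ltr_wpDr => //; rewrite real_sq_gt0.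
- apply/orP; right; apply/orP; right; rewrite mulr_gt0 //.
  by apply: ltr_wpDl => //; rewrite mulr_gt0 // real_sq_gt0.
Qed.

Lemma no_int_root (P : {poly int}) (c : int) :
  irreducible_poly P -> (2 < size P)%N -> ~~ root P c.
Proof.
move=> irrP sP; apply/negP => /factor_theorem [q Pq].
have := irrP ('X - c%:P); rewrite size_XsubC => /(_ isT).
rewrite Pq dvdp_mulIr => /(_ isT) /eqp_size.
by rewrite -Pq size_XsubC => E; rewrite -E in sP.
Qed.

Lemma no_intr_root (P : {poly int}) (c : int) :
  irreducible_poly P -> (2 < size P)%N -> ~~ root (map_poly intr P : {poly algC}) c%:~R.
Proof.
move=> irrP sP; have := no_int_root c irrP sP.
by rewrite /root horner_map intr_eq0.
Qed.

Section Emb.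
Variables (P : {poly int}) (gamma : algC) (F : fieldExtType rat)
  (sigma : {rmorphism F -> algC}) (delta a : F).
Hypotheses (Pirr : irreducible_poly P) (Psize : (2 < size P)%N)
 (Proots : forall z : algC, root (map_poly intr P) z -> z \is Num.real \/ `|z| = 1)
 (groot : root (map_poly intr P) gamma) (gnorm : `|gamma| = 1)
 (gen : <<1%VS; delta>>%VS = fullv) (sd : sigma delta = gamma + gamma^-1)
 (sa : sigma a = (gamma - gamma^-1) ^+ 2).

Local Notation PC := (map_poly intr P : {poly algC}).

Lemma root_ne z : root PC z -> z != 0 /\ z ^+ 2 != 1.
Proof.
move=> rz; split.
  by apply: contraTneq rz => ->; have := no_intr_root 0 Pirr Psize; rewrite mulr0z.
rewrite sqrf_eq1; apply/negP => /orP [] /eqP E; move: rz; rewrite E.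
  by have := no_intr_root 1 Pirr Psize; rewrite mulr1z => /negPf ->.
by have := no_intr_root (-1) Pirr Psize; rewrite mulrN1z => /negPf ->.
Qed.

Lemma ginv : gamma^-1 = gamma^*.
Proof. by rewrite invC_norm gnorm expr1n invr1 mul1r. Qed.

Lemma PC_conj : map_poly Num.conj PC = PC.
Proof. by rewrite -map_poly_comp; apply: eq_map_poly => x /=; rewrite rmorph_int. Qed.

Lemma root_ginv : root PC gamma^-1.
Proof.
by rewrite ginv /root -{1}PC_conj horner_map (rootP groot) rmorph0.
Qed.

Lemma g_ne0 : gamma != 0. Proof. by case: (root_ne groot). Qed.

Lemma g_ne_ginv : gamma != gamma^-1.
Proof.
apply: contraNneq (proj2 (root_ne groot)) => E.
by rewrite expr2 {2}E mulfV ?g_ne0.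
Qed.

Lemma a_eq : a = delta ^+ 2 - 4%:R.
Proof.
apply: (fmorph_inj sigma); rewrite sa rmorphB rmorphXn sd rmorph_nat.
have g0 := g_ne0; field; exact: g0.
Qed.


Lemma size_quad (R : nzRingType) (c : R) : size ('X^2 + c *: 'X + 1 : {poly R}) = 3.
Proof.
rewrite -addrA size_addl size_polyXn //.
apply: (leq_ltn_trans (size_add _ _)); rewrite gtn_max size_poly1 andbT.
by apply: (leq_ltn_trans (size_scale_leq _ _)); rewrite size_polyX.
Qed.

Lemma map_PF (f : {rmorphism F -> algC}) :
  map_poly f (map_poly intr P : {poly F}) = PC.
Proof. by rewrite -map_poly_comp; apply: eq_map_poly => x /=; rewrite rmorph_int. Qed.

Lemma map_quad (f : {rmorphism F -> algC}) (c : F) :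
  map_poly f ('X^2 + c *: 'X + 1) = 'X^2 + f c *: 'X + 1.
Proof. by rewrite !rmorphD /= map_polyXn map_polyZ map_polyX rmorph1. Qed.

Lemma chi_delta (chi : {rmorphism F -> algC}) :
  exists tau, root PC tau /\ chi delta = tau + tau^-1.
Proof.
pose PF : {poly F} := map_poly intr P.
pose D : {poly F} := 'X^2 + (- delta) *: 'X + 1.
have D0 : D != 0 by rewrite -size_poly_eq0 size_quad.
have R0 : PF %% D = 0.
  apply/eqP; rewrite -(map_poly_eq0 sigma) map_modp map_PF map_quad rmorphN sd.
  set DC := (X in PC %% X); set R := PC %% DC.
  have DC0 : DC != 0 by rewrite -size_poly_eq0 size_quad.
  have sR : (size R < size DC)%N by rewrite ltn_modp.
  have rootR x : root PC x -> root DC x -> root R x.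
    move=> /rootP Px /rootP Dx; apply/rootP.
    have := divp_eq PC DC; rewrite -/R => E.
    by move: Px; rewrite {1}E hornerD hornerM Dx mulr0 add0r.
  have g0 := g_ne0.
  have Dg : root DC gamma.
    by apply/rootP; rewrite !hornerE /=; field; exact: g0.
  have Dgi : root DC gamma^-1.
    by apply/rootP; rewrite !hornerE /=; field; exact: g0.
  apply: contraT => nzR.
  have H : (size [:: gamma; gamma^-1] < size R)%N.
    apply: max_poly_roots nzR _ _.
      by rewrite /= !rootR ?root_ginv.
    by rewrite /= inE g_ne_ginv.
  by move: (leq_ltn_trans H sR); rewrite size_quad.
have PFE : PF = (PF %/ D) * D by rewrite {1}(divp_eq PF D) R0 addr0.
have [tau rt] : exists tau, root (map_poly chi D) tau.
  by apply/closed_rootP; rewrite map_quad size_quad.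
exists tau; split.
  by rewrite -(map_PF chi) -/PF PFE rmorphM /= /root hornerM (rootP rt) mulr0.
move: rt; rewrite map_quad rmorphN /root !hornerE /= => /eqP E.
have t0 : tau != 0.
  by apply: contra_eq_neq E => ->; rewrite expr0n /= mulr0 !add0r oner_neq0.
have -> : chi delta = (tau ^+ 2 + 1) / tau.
  apply/(mulIf t0); rewrite mulfVK //; apply/eqP; rewrite eq_sym -subr_eq0.
  by apply/eqP; rewrite -E; ring.
by field.
Qed.


Lemma mu_real tau : root PC tau -> (tau + tau^-1) \is Num.real.
Proof.
move=> rt; case: (Proots rt) => [re|n1].
  by rewrite rpredD // rpredV.
rewrite invC_norm n1 expr1n invr1 mul1r CrealE rmorphD /= conjCK addrC //.
Qed.

Lemma mu_sq tau : root PC tau -> (tau + tau^-1) ^+ 2 != 4%:R.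
Proof.
move=> rt; have [t0 t2] := root_ne rt.
have -> : (tau + tau^-1) ^+ 2 = (tau - tau^-1) ^+ 2 + 4%:R.
  by field.
rewrite -subr_eq0 addrK sqrf_eq0 subr_eq0.
apply: contra t2 => /eqP E; apply/eqP.
by rewrite expr2 {2}E mulfV.
Qed.


Lemma chi_real (chi : {rmorphism F -> algC}) z : chi z \is Num.real.
Proof.
have zin : z \in <<1%VS; delta>>%VS by rewrite gen memvf.
rewrite -(Fadjoin_poly_eq zin) -horner_map.
have [tau [rt ->]] := chi_delta chi.
apply: rpred_horner; last exact: mu_real.
apply/polyOverP => i; rewrite coef_map /=.
have /polyOverP /(_ i) := Fadjoin_polyOver 1%VS delta z.
case/vlineP => k ->.
by rewrite -/(k%:A) alg_num_field fmorph_rat ratr_real.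
Qed.



Variable p : nat.
Hypothesis pprime : prime p.
Hypothesis Pmon : P \is monic.

Lemma chi_form (chi : {rmorphism F -> algC}) (X0 X2 A B W c : F) :
  chi (X0 ^+ 2 + c * X2 ^+ 2 - W * (A ^+ 2 + c * B ^+ 2)) =
  chi X0 ^+ 2 + chi c * chi X2 ^+ 2 + chi (- W) * (chi A ^+ 2 + chi c * chi B ^+ 2).
Proof.
by rewrite !(rmorphB, rmorphD, rmorphM, rmorphN); ring.
Qed.

Lemma main_aux : exists phi : quat F -> quat F, positive_anti_involution a p%:R phi.
Proof.
have p0 : (0 < p)%N := prime_gt0 pprime.
pose b : F := p%:R.
have PCmon : PC \is monic by apply: monic_map.
have [rs Ers] := closed_field_poly_normal PC.
have inrs tau : root PC tau -> tau \in rs.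
  by rewrite Ers (monicP PCmon) scale1r root_prod_XsubC.
pose l := [seq (tau + tau^-1) ^+ 2 | tau <- rs].
have hp : (0 : rat) < p%:R by rewrite ltr0n.
have [s Hs] := gap l hp.
pose t : F := ratr s * delta.
have key (chi : {rmorphism F -> algC}) : chi a * chi (1 - b * t ^+ 2) < 0.
  have [tau [rt E]] := chi_delta chi.
  rewrite a_eq /t /b !(rmorphB, rmorphXn, rmorph1, rmorph_nat).
  rewrite rmorphM rmorph_nat rmorphXn rmorphM fmorph_rat E.
  have H := Hs ((tau + tau^-1) ^+ 2) (map_f _ (inrs tau rt))
     (rpredX _ (mu_real rt)) (mu_sq rt).
  rewrite rmorphM rmorphXn rmorph_nat in H.
  by rewrite exprMn mulrA.
have d0 : 1 - b * t ^+ 2 != 0.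
  apply: contraTneq (key sigma) => ->; by rewrite rmorph0 mulr0 ltxx.
exists (qphi b t); split.
  split.
  - exact: qphi_lin.
  - exact: qphi1.
  - exact: qphiK.
  - exact: qphiM.
move=> x x0.
rewrite qtrace_E pmulrn_lgt0 //.
apply: trMof_gt0 => chi.
rewrite /pr0 qphi_pos // chi_form rmorph_nat.
have cr z : chi z \is Num.real := chi_real chi z.
have kc := key chi.
have cd0 : chi (1 - b * t ^+ 2) != 0.
  by apply: contraTneq kc => ->; rewrite mulr0 ltxx.
apply: pos_combo; rewrite ?cr ?ltr0n //.
- rewrite rmorphN fmorph_div.
  have rca := cr a; have rcd := cr (1 - b * t ^+ 2).
  move: kc cd0 rca rcd; move: (chi a) (chi (1 - b * t ^+ 2)) => ca cd kc cd0 rca rcd.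
  have -> : - (ca / cd) = (- (ca * cd)) * cd^-1 ^+ 2 by field.
  by rewrite mulr_gt0 // ?oppr_gt0 // real_sq_gt0 ?rpredV ?invr_eq0.
rewrite !fmorph_eq0.
apply: contraR x0; rewrite !negb_or !negbK => /and4P [/eqP h0 /eqP h2 /eqP hA /eqP hB].
case: x h0 h2 hA hB => [[[y0 y1] y2] y3] /= -> -> hA hB.
have E : y1 * (1 - b * t ^+ 2) = y1 - b * t * y3.
  by move/eqP: hB; rewrite subr_eq0 => /eqP ->; ring.
rewrite hA in E; move/eqP: E; rewrite mulf_eq0 (negPf d0) orbF => /eqP y10.
move/eqP: hB; rewrite y10 mulr0 subr0 => /eqP ->.
by [].
Qed.

End Emb.

Unset Implicit Arguments.

(* F = Q(gamma + gamma^-1) is given as a number field F (a finite extension of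
   Q) together with a field embedding sigma : F -> C (algC) and a generator
   delta of F over Q with sigma delta = gamma + gamma^-1. *)
Theorem mainTheorem9 (P : {poly int}) (gamma : algC)
    (F : fieldExtType rat) (sigma : {rmorphism F -> algC}) (delta a : F)
    (p : nat) :
  P \is monic -> irreducible_poly P -> (2 < size P)%N ->
  (forall z : algC, root (map_poly intr P) z -> z \is Num.real \/ `|z| = 1) ->
  (exists z : algC, root (map_poly intr P) z /\ `|z| = 1) ->
  root (map_poly intr P) gamma -> `|gamma| = 1 ->
  <<1%VS; delta>>%VS = fullv -> sigma delta = gamma + gamma^-1 ->
  sigma a = (gamma - gamma^-1) ^+ 2 ->
  prime p -> quat_division a p%:R ->
  exists phi : quat F -> quat F, positive_anti_involution a p%:R phi.
Proof.
move=> Pmon Pirr Psize Proots _ groot gnorm gen sd sa pprime _.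
exact: (main_aux Pirr Psize Proots groot gnorm gen sd sa pprime Pmon).
Qed.
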